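(* Let $G$ be a multigraph with $V(G)=S\cup\mathcal{T}$, $S\cap\mathcal{T}=\emptyset$, where every terminal in $\mathcal{T}$ has degree exactly one and is adjacent to a vertex of $S$, $G[S]$ is connected, and $k=|\partial(S)|=|\mathcal{T}|\ge 3$. Then $S$ can be partitioned into at most $k-2$ sets, each of which is connectivity-$2$ linked in $G$.
   Context: For disjoint vertex sets $A,B$, $E_G(A,B)$ is the set of edges with one endpoint in $A$ and the other in $B$; for $Y\subseteq V(G)$, $\partial(Y)=E_G(Y,V(G)\setminus Y)$. A set $X\subseteq S$ is connectivity-$c$ linked in $G$ if for every pair of disjoint sets $A,B$ with $A\cup B=X$ we have $|E_G(A,B)|\ge \min\big(|\partial(A)\cap\partial(X)|,\ |\partial(B)\cap\partial(X)|,\ c\big)$. *)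

(* Defs.v *)
(* A multigraph is given by a finite vertex type V, a finite
   edge type E and two endpoint maps src tgt : E -> V (parallel edges and
   loops allowed). *)
From mathcomp Require Import all_boot.
Set Implicit Arguments. Unset Strict Implicit. Unset Printing Implicit Defensive.

Section Multigraph.
Variables (V E : finType) (src tgt : E -> V).

Definition edges_between (A B : {set V}) : {set E} :=
  [set e | ((src e \in A) && (tgt e \in B)) || ((src e \in B) && (tgt e \in A))].

Definition bnd (Y : {set V}) : {set E} := edges_between Y (~: Y).

(* degree of v (a loop counts twice) *)
Definition deg (v : V) : nat :=
  #|[set e | src e == v]| + #|[set e | tgt e == v]|.

Definition adj (u v : V) : bool :=
  [exists e, ((src e == u) && (tgt e == v)) || ((src e == v) && (tgt e == u))].

Definition induced_rel (S : {set V}) : rel V :=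
  fun u v => [&& u \in S, v \in S & adj u v].

Definition induced_connected (S : {set V}) : Prop :=
  S != set0 /\ forall u v, u \in S -> v \in S -> connect (induced_rel S) u v.

Definition conn_linked (c : nat) (X : {set V}) : Prop :=
  forall A B : {set V}, [disjoint A & B] -> A :|: B = X ->
    minn (minn #|bnd A :&: bnd X| #|bnd B :&: bnd X|) c <= #|edges_between A B|.

End Multigraph.

(* Main.v *)
Require Import Defs.
From mathcomp Require Import all_boot zify.
From Stdlib Require Import Classical.
Set Implicit Arguments. Unset Strict Implicit. Unset Printing Implicit Defensive.

Lemma dis_mem (T : finType) (A B : {set T}) x :
  [disjoint A & B] -> (x \in A) && (x \in B) = false.
Proof. by rewrite -setI_eq0 -in_setI => /eqP ->; rewrite inE. Qed.

Lemma mem_dis (T : finType) (A B : {set T}) :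
  (forall x, (x \in A) && (x \in B) = false) -> [disjoint A & B].
Proof. by move=> H; rewrite -setI_eq0; apply/eqP/setP => x; rewrite inE in_set0 H. Qed.

Definition conn' (V E : finType) (src tgt : E -> V) (X : {set V}) :=
  forall A B : {set V}, [disjoint A & B] -> A :|: B = X -> A != set0 -> B != set0 ->
    0 < #|edges_between src tgt A B|.

Lemma card_split (V E : finType) (src tgt : E -> V) (A B : {set V}) :
  [disjoint A & B] ->
  #|bnd src tgt (A :|: B)| = #|bnd src tgt A :&: bnd src tgt (A :|: B)|
                            + #|bnd src tgt B :&: bnd src tgt (A :|: B)|.
Proof.
move=> d; rewrite -(cardsID (bnd src tgt A) (bnd src tgt (A :|: B))) setIC.
congr (_ + _); apply: eq_card => e.
rewrite !inE; move: (dis_mem (src e) d) (dis_mem (tgt e) d).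
by case: (src e \in A); case: (src e \in B); case: (tgt e \in A); case: (tgt e \in B).
Qed.

Lemma card_bndA (V E : finType) (src tgt : E -> V) (A B : {set V}) :
  [disjoint A & B] ->
  #|bnd src tgt A| = #|bnd src tgt A :&: bnd src tgt (A :|: B)|
                            + #|edges_between src tgt A B|.
Proof.
move=> d; rewrite -(cardsID (bnd src tgt (A :|: B)) (bnd src tgt A)).
congr (_ + _); apply: eq_card => e.
rewrite !inE; move: (dis_mem (src e) d) (dis_mem (tgt e) d).
by case: (src e \in A); case: (src e \in B); case: (tgt e \in A); case: (tgt e \in B).
Qed.

Lemma EB_sym (V E : finType) (src tgt : E -> V) (A B : {set V}) :
  edges_between src tgt A B = edges_between src tgt B A.
Proof. by apply/setP => e; rewrite !inE orbC. Qed.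
Lemma bnd_ne (V E : finType) (src tgt : E -> V) (A : {set V}) e :
  e \in bnd src tgt A -> A != set0.
Proof.
rewrite inE => /orP[/andP[h _]|/andP[_ h]]; apply/set0Pn; eexists; exact: h.
Qed.

Lemma conn_sub (V E : finType) (src tgt : E -> V) (A B : {set V}) :
  conn' src tgt (A :|: B) -> [disjoint A & B] ->
  #|edges_between src tgt A B| <= 1 -> conn' src tgt A.
Proof.
move=> cX dAB h1 A1 A2 d12 U12 n1 n2; subst A.
have hAB x : ((x \in A1) || (x \in A2)) && (x \in B) = false.
  by have := dis_mem x dAB; rewrite inE.
have h12 := fun x => dis_mem x d12.
have c1 := cX A1 (A2 :|: B).
have c2 := cX (A1 :|: B) A2.
have e1 : edges_between src tgt A1 (A2 :|: B) =
   edges_between src tgt A1 A2 :|: edges_between src tgt A1 B.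
  apply/setP => e; rewrite !inE; move: (hAB (src e)) (hAB (tgt e)) (h12 (src e)) (h12 (tgt e)).
  by case: (src e \in A1); case: (src e \in A2); case: (src e \in B);
     case: (tgt e \in A1); case: (tgt e \in A2); case: (tgt e \in B).
have e2 : edges_between src tgt (A1 :|: B) A2 =
   edges_between src tgt A1 A2 :|: edges_between src tgt B A2.
  apply/setP => e; rewrite !inE; move: (hAB (src e)) (hAB (tgt e)) (h12 (src e)) (h12 (tgt e)).
  by case: (src e \in A1); case: (src e \in A2); case: (src e \in B);
     case: (tgt e \in A1); case: (tgt e \in A2); case: (tgt e \in B).
have e3 : #|edges_between src tgt A1 B :|: edges_between src tgt B A2| =
    #|edges_between src tgt A1 B| + #|edges_between src tgt B A2|.
  rewrite cardsU; suff -> : edges_between src tgt A1 B :&: edges_between src tgt B A2 = set0.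
    by rewrite cards0 subn0.
  apply/setP => e; rewrite !inE; move: (hAB (src e)) (hAB (tgt e)) (h12 (src e)) (h12 (tgt e)).
  by case: (src e \in A1); case: (src e \in A2); case: (src e \in B);
     case: (tgt e \in A1); case: (tgt e \in A2); case: (tgt e \in B).
have e4 : #|edges_between src tgt A1 B :|: edges_between src tgt B A2| <= 1.
  apply: leq_trans h1; apply: subset_leq_card; apply/subsetP => e.
  rewrite !inE; move: (hAB (src e)) (hAB (tgt e)) (h12 (src e)) (h12 (tgt e)).
  by case: (src e \in A1); case: (src e \in A2); case: (src e \in B);
     case: (tgt e \in A1); case: (tgt e \in A2); case: (tgt e \in B).
have d1 : [disjoint A1 & A2 :|: B].
  apply: mem_dis => x; rewrite inE; move: (hAB x) (h12 x).
  by case: (x \in A1); case: (x \in A2); case: (x \in B).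
have d2 : [disjoint A1 :|: B & A2].
  apply: mem_dis => x; rewrite inE; move: (hAB x) (h12 x).
  by case: (x \in A1); case: (x \in A2); case: (x \in B).
have u1 : A1 :|: (A2 :|: B) = A1 :|: A2 :|: B by rewrite setUA.
have u2 : A1 :|: B :|: A2 = A1 :|: A2 :|: B by rewrite setUAC.
have n2' : A2 :|: B != set0 by rewrite setU_eq0 negb_and n2.
have n1' : A1 :|: B != set0 by rewrite setU_eq0 negb_and n1.
move: (c1 d1 u1 n1 n2') (c2 d2 u2 n1' n2); rewrite e1 e2.
move: (leq_card_setU (edges_between src tgt A1 A2) (edges_between src tgt A1 B)) => [l1 _].
move: (leq_card_setU (edges_between src tgt A1 A2) (edges_between src tgt B A2)) => [l2 _].
lia.
Qed.
Lemma path_cross (T : finType) (r : rel T) (A : {set T}) (p : seq T) :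
  forall u, path r u p -> u \in A -> last u p \notin A ->
  exists x y, [/\ r x y, x \in A & y \notin A].
Proof.
elim: p => [|a p IH] u /=; first by move=> _ ->.
move=> /andP[ra pa] uA la.
case aA: (a \in A); first exact: IH pa aA la.
by exists u, a; rewrite aA.
Qed.

Lemma conn_of (V E : finType) (src tgt : E -> V) (S : {set V}) :
  induced_connected src tgt S -> conn' src tgt S.
Proof.
move=> [_ hc] A B d U nA nB.
have [u uA] := set0Pn _ nA; have [v vB] := set0Pn _ nB.
have uS : u \in S by rewrite -U inE uA.
have vS : v \in S by rewrite -U inE vB orbT.
move: (hc u v uS vS) => /connectP [p pp vl].
have vA : last u p \notin A.
  by rewrite -vl; move: (dis_mem v d); move: vB; case: (_ \in B) => //; case: (_ \in A).
have [x [y [/and3P [xS yS /existsP [e he]] xA yA]]] := path_cross pp uA vA.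
have yB : y \in B by move: yS yA; rewrite -U inE; case: (y \in A).
apply/card_gt0P; exists e; rewrite inE.
by case/orP: he => /andP [/eqP -> /eqP ->]; rewrite ?xA ?yB ?orbT.
Qed.

Lemma bnd0 (V E : finType) (src tgt : E -> V) : bnd src tgt set0 = set0.
Proof. by apply/setP => e; rewrite !inE. Qed.

Lemma gen (V E : finType) (src tgt : E -> V) n : forall X : {set V},
  #|X| < n -> conn' src tgt X -> 3 <= #|bnd src tgt X| ->
  exists P : {set {set V}},
    [/\ partition P X, #|P| <= #|bnd src tgt X| - 2 & forall Y, Y \in P -> conn_linked src tgt 2 Y].
Proof.
elim: n => [//|n IH] X hX cX h3.
case: (classic (conn_linked src tgt 2 X)) => [lk|nlk].
  have Xn : X != set0.
    by apply/negP => /eqP X0; move: h3; rewrite X0 bnd0 cards0.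
  exists [set X]; split.
  - by rewrite /partition cover1 eqxx trivIset1 /= inE eq_sym.
  - by rewrite cards1; lia.
  - by move=> Y /set1P ->.
have [A nlkA] := not_all_ex_not _ _ nlk.
have [B nlkB] := not_all_ex_not _ _ nlkA.
have [d nlk1] := imply_to_and _ _ nlkB.
have [U nlk2] := imply_to_and _ _ nlk1.
move/negP: nlk2; rewrite -ltnNge => hlt.
subst X.
set dA := #|bnd src tgt A :&: bnd src tgt (A :|: B)| in hlt.
set dB := #|bnd src tgt B :&: bnd src tgt (A :|: B)| in hlt.
have nA : A != set0.
  have : 0 < dA by lia.
  by move/card_gt0P => [e]; rewrite inE => /andP [/bnd_ne].
have nB : B != set0.
  have : 0 < dB by lia.
  by move/card_gt0P => [e]; rewrite inE => /andP [/bnd_ne].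
have c1 := cX A B d erefl nA nB.
have dBA : [disjoint B & A] by rewrite disjoint_sym.
have sX := card_split src tgt d.
have sA := card_bndA src tgt d.
have sB := card_bndA src tgt dBA.
rewrite setUC (EB_sym src tgt B A) -/dB in sB.
have cA : conn' src tgt A by apply: conn_sub cX d _; lia.
have cB : conn' src tgt B.
  apply: conn_sub dBA _; first by rewrite setUC.
  rewrite EB_sym; lia.
have cardX : #|A :|: B| = #|A| + #|B|.
  by rewrite cardsU; move: d; rewrite -setI_eq0 => /eqP ->; rewrite cards0 subn0.
have gA : 0 < #|A| by rewrite card_gt0.
have gB : 0 < #|B| by rewrite card_gt0.
have [PA [pA cPA lPA]] := IH A ltac:(lia) cA ltac:(lia).
have [PB [pB cPB lPB]] := IH B ltac:(lia) cB ltac:(lia).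
exists (PA :|: PB); split.
- move: pA pB => /and3P [/eqP covA tA nA0] /and3P [/eqP covB tB nB0].
  rewrite /partition /cover bigcup_setU -/(cover PA) -/(cover PB) covA covB eqxx /=.
  rewrite inE negb_or nA0 nB0 andbT.
  rewrite trivIsetU // covA covB disjoint_sym //.
- move: (leq_card_setU PA PB) => [l _]; lia.
- by move=> Y /setUP [/lPA | /lPB].
Qed.

Theorem mainTheorem3 (V E : finType) (src tgt : E -> V) (S T : {set V}) (k : nat) :
  [disjoint S & T] -> S :|: T = [set: V] ->
  (forall t, t \in T -> deg src tgt t = 1 /\ exists2 s, s \in S & adj src tgt t s) ->
  induced_connected src tgt S ->
  k = #|bnd src tgt S| -> k = #|T| -> 3 <= k ->
  exists P : {set {set V}},
    [/\ partition P S, #|P| <= k - 2 & forall X, X \in P -> conn_linked src tgt 2 X].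
Proof.
move=> _ _ _ ic -> _ h3.
exact: (gen (n := #|S|.+1) (ltnSn _) (conn_of ic) h3).
Qed.
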